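(* Let $k$ be the number of agents. For every $\rho>1-\frac{1}{2k+1}$ there exists an instance of fully-symmetric adversarial multi-agent delegation with $k$ agents such that no (deterministic) delegation mechanism $M$ achieves $\mathbb{E}[\mathrm{Principal}]\ge\rho\,\mathbb{E}[\mathrm{Opt}]$ when the agents behave adversarially, where $\mathrm{Opt}=\max_{e\in E}x(V(e))$. That is, no mechanism achieves strictly better than a $\left(1-\frac{1}{2k+1}\right)$-approximation on all such instances.
   Context: Multi-agent delegation instance: $k$ agents; agent $i$ holds elements $e_{i,1},\dots,e_{i,m_i}$; $E$ is the set of all elements. Each element $e$ has a random outcome $V(e)$ drawn from a distribution over its own outcome set $\Omega(e)$ (disjoint across elements), the $V(e)$ being mutually independent; each outcome $\omega$ has principal utility $x(\omega)\ge0$. Each agent observes the realized outcomes of its own elements. Fully-symmetric: all agents have the same number of elements and all $V(e)$ are identically distributed. A (deterministic) mechanism consists of signal sets $\Sigma_1,\dots,\Sigma_k$ and a function $g:\Sigma_1\times\dots\times\Sigma_k\to\Omega\cup\{\bot\}$ ($\Omega$ the set of all outcomes); each agent sends a signal, and if $g$ outputs an outcome $\omega$ actually observed by some agent, the principal gets $x(\omega)$ and that agent wins; if $g$ outputs $\bot$ or an unobserved outcome, the principal gets $0$. Adversarial behavior: each agent chooses its signal to minimize the principal's expected utility subject to keeping a positive probability of winning. $\mathrm{Principal}$ denotes the principal's (random) utility. *)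

(* Defs.v *)
From mathcomp Require Import all_boot all_order all_algebra.
From mathcomp Require Import reals.
Set Implicit Arguments. Unset Strict Implicit. Unset Printing Implicit Defensive.
Import Order.TTheory GRing.Theory Num.Theory.
Local Open Scope ring_scope.

(*  - k agents, indexed by 'I_k; agent i holds the m elements (i, j), j<m. *)
(*  - Every element has a copy of a common finite outcome-type set T, with *)
(*    common probabilities p : T -> R and principal utility x : T -> R.    *)
(*    The outcome set of element (i,j) is Omega(i,j) = {(i,j,t) | t : T}, *)
(*    so outcome sets are disjoint and all V(e) are identically            *)
(*    distributed.                                                          *)
(*  - A realization w assigns to every element (i,j) its outcome type      *)
(*    w i j; the V(e) are independent: prob w = prod_{i,j} p (w i j).      *)

Section Delegation.
Variables (R : realType) (k m : nat) (T : finType).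

Definition obs := {ffun 'I_m -> T}.
Definition realization := {ffun 'I_k -> obs}.
Definition outcome := ('I_k * 'I_m * T)%type.

Variables (p x : T -> R).

Definition sym_instance : Prop :=
  [/\ forall t, 0 <= p t, \sum_(t : T) p t = 1 & forall t, 0 <= x t].

Definition prob_real (w : realization) : R :=
  \prod_(i < k) \prod_(j < m) p (w i j).

(* principal's utility when g outputs o (None = bottom) under realization w:
   x(omega) if omega is actually observed (by its owner), 0 otherwise *)
Definition payoff (o : option outcome) (w : realization) : R :=
  if o is Some (i, j, t) then (if w i j == t then x t else 0) else 0.

Definition wins (i : 'I_k) (o : option outcome) (w : realization) : bool :=
  if o is Some (i', j, t) then (i' == i) && (w i' j == t) else false.

Definition EOpt : R :=
  \sum_(w : realization) prob_real w *
     \big[Num.max/0]_(e : 'I_k * 'I_m) x (w e.1 e.2).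

(* A deterministic mechanism: signal sets Sigma i and g. *)
Variables (Sigma : 'I_k -> Type) (g : (forall i, Sigma i) -> option outcome).

Definition profile := forall i : 'I_k, obs -> Sigma i.

Definition signals (s : profile) (w : realization) : forall i, Sigma i :=
  fun i => s i (w i).

Definition EPrincipal (s : profile) : R :=
  \sum_(w : realization) prob_real w * payoff (g (signals s w)) w.

(* For agent i observing a and sending sigma while the others follow s:
   (unnormalised, i.e. multiplied by P[agent i observes a]) expected
   principal utility and probability that agent i wins. *)
Definition Udev (s : profile) (i : 'I_k) (a : obs) (sigma : Sigma i) : R :=
  \sum_(w : realization | w i == a)
     prob_real w * payoff (g (dfwith (signals s w) sigma)) w.

Definition Wdev (s : profile) (i : 'I_k) (a : obs) (sigma : Sigma i) : R :=
  \sum_(w : realization | w i == a)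
     prob_real w * (wins i (g (dfwith (signals s w) sigma)) w)%:R.

Definition adversarial (s : profile) : Prop :=
  forall (i : 'I_k) (a : obs),
    ((exists sigma : Sigma i, 0 < Wdev s a sigma) ->
       0 < Wdev s a (s i a) /\
       forall sigma : Sigma i, 0 < Wdev s a sigma -> Udev s a (s i a) <= Udev s a sigma)
    /\
    ((~ exists sigma : Sigma i, 0 < Wdev s a sigma) ->
       forall sigma : Sigma i, Udev s a (s i a) <= Udev s a sigma).

(* M achieves E[Principal] >= rho E[Opt] under adversarial behaviour:
   adversarial behaviour is well defined (some adversarial profile exists)
   and every adversarial profile yields the guarantee. *)
Definition achieves (rho : R) : Prop :=
  (exists s : profile, adversarial s) /\
  forall s : profile, adversarial s -> rho * EOpt <= EPrincipal s.

End Delegation.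

(* Main.v *)
Require Import Defs.
From mathcomp Require Import all_boot all_order all_algebra.
From mathcomp Require Import reals.
From mathcomp Require Import ring lra.
From Stdlib Require Import FunctionalExtensionality.
Set Implicit Arguments. Unset Strict Implicit. Unset Printing Implicit Defensive.
Import Order.TTheory GRing.Theory Num.Theory.
Local Open Scope ring_scope.

Lemma marg (R : realType) (I J : finType) (P : J -> R) (i0 : I) (F : J -> R) :
  \sum_(f : {ffun I -> J}) (\prod_i P (f i)) * F (f i0)
  = (\sum_j P j * F j) * \prod_(i | i != i0) \sum_j P j.
Proof.
pose G i j := if i == i0 then P j * F j else P j.
transitivity (\sum_(f : {ffun I -> J}) \prod_i G i (f i)).
  apply: eq_bigr => f _.
  rewrite (bigD1 i0) //= [RHS](bigD1 i0) //= /G eqxx.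
  rewrite [X in _ = _ * X](eq_bigr (fun i => P (f i))); last first.
    by move=> i /negbTE ->.
  by rewrite mulrAC.
rewrite -bigA_distr_bigA (bigD1 i0) //= /G eqxx; congr (_ * _).
by apply: eq_bigr => i /negbTE ->.
Qed.

Lemma tot (R : realType) (I J : finType) (P : J -> R) :
  \sum_(f : {ffun I -> J}) \prod_i P (f i) = \prod_(i : I) \sum_j P j.
Proof. by rewrite bigA_distr_bigA. Qed.

Lemma bern (R : realType) (q : R) (n : nat) : 0 <= q <= 1 ->
  1 - n%:R * q <= (1 - q) ^+ n.
Proof.
move=> /andP[q0 q1]; elim: n => [|n IH]; first by rewrite expr0 mul0r subr0.
rewrite exprS -natr1.
have h : (1 - q) * (1 - n%:R * q) <= (1 - q) * (1 - q) ^+ n.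
  by apply: ler_wpM2l => //; lra.
have hn : 0 <= n%:R :> R by [].
nra.
Qed.

Section Main.
Variables (R : realType) (k : nat) (hk : (0 < k)%N) (q : R) (q0 : 0 < q)
  (q1 : q <= 1/4) (hkq : (k.*2)%:R * q <= 1/3).

Ltac lr := move: (q0) (q1) (hkq) => ? ? ?; lra.

Definition pp (b : bool) : R := if b then q else 1 - q.
Definition xx (b : bool) : R := if b then q^-1 else 1.
Definition Pobs (a : obs 2 bool) : R := \prod_j pp (a j).

Lemma pp_ge0 b : 0 <= pp b. Proof. rewrite /pp; case: b => /=; lr. Qed.
Lemma pp_gt0 b : 0 < pp b. Proof. rewrite /pp; case: b => /=; lr. Qed.
Lemma qinv1 : 1 <= q^-1.
Proof. rewrite invf_ge1 //; lr. Qed.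
Lemma xx_ge0 b : 0 <= xx b. Proof. rewrite /xx; case: b => /=; have := qinv1; lr. Qed.
Lemma xx_le b : xx b <= q^-1. Proof. rewrite /xx; case: b => /=; have := qinv1; lr. Qed.

Lemma sum_pp : \sum_b pp b = 1.
Proof. rewrite big_bool /pp /=; lr. Qed.

Lemma sum_Pobs : \sum_a Pobs a = 1.
Proof. rewrite /Pobs tot; under eq_bigr do rewrite sum_pp. by rewrite big1. Qed.

Lemma Pobs_ge0 a : 0 <= Pobs a.
Proof. by apply: prodr_ge0 => j _; apply: pp_ge0. Qed.
Lemma Pobs_gt0 a : 0 < Pobs a.
Proof. by apply: prodr_gt0 => j _; apply: pp_gt0. Qed.
Lemma Pobs_le1 a : Pobs a <= 1.
Proof. apply: prodr_ile1 => j _; rewrite pp_ge0 /pp; case: (a j) => /=; lr. Qed.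

Lemma prob_ge0 (w : realization k 2 bool) : 0 <= prob_real pp w.
Proof. by apply: prodr_ge0 => i _; apply: Pobs_ge0. Qed.

Lemma marg_real (F : obs 2 bool -> R) (i0 : 'I_k) :
  \sum_(w : realization k 2 bool) prob_real pp w * F (w i0) = \sum_a Pobs a * F a.
Proof.
rewrite /prob_real (marg (fun a : obs 2 bool => \prod_j pp (a j))).
under [X in _ * X = _]eq_bigr do rewrite sum_Pobs.
by rewrite big1_eq mulr1.
Qed.

Lemma sum_prob : \sum_(w : realization k 2 bool) prob_real pp w = 1.
Proof.
rewrite /prob_real (@tot _ _ _ (fun a : obs 2 bool => \prod_j pp (a j))).
by under eq_bigr do rewrite sum_Pobs; rewrite big1.
Qed.

Lemma marg_elem (i : 'I_k) (j : 'I_2) :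
  \sum_(w : realization k 2 bool) prob_real pp w * (w i j)%:R = q.
Proof.
rewrite (marg_real (fun a => (a j)%:R)) /Pobs (marg pp j (fun b : bool => (b : nat)%:R)).
under [X in _ * X = _]eq_bigr do rewrite sum_pp.
by rewrite big1_eq mulr1 big_bool /= mulr1 mulr0 addr0.
Qed.

Definition optw (w : realization k 2 bool) : R :=
  \big[Num.max/0]_(e : 'I_k * 'I_2) xx (w e.1 e.2).

Lemma optw_le w : optw w <= 1 + \sum_(e : 'I_k * 'I_2) q^-1 * (w e.1 e.2)%:R.
Proof.
apply: bigmax_le.
  apply: addr_ge0 => //; apply: sumr_ge0 => e _; apply: mulr_ge0 => //.
  by rewrite invr_ge0 ltW.
move=> e _; rewrite (bigD1 e) //=.
have h1 : 0 <= \sum_(i | i != e) q^-1 * (w i.1 i.2)%:R.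
  apply: sumr_ge0 => e' _; apply: mulr_ge0 => //; by rewrite invr_ge0 ltW.
rewrite /xx; case: (w e.1 e.2) => /=; rewrite ?mulr1 ?mulr0; have := qinv1; lr.
Qed.

Lemma EOpt_le : EOpt k 2 pp xx <= 1 + (k.*2)%:R.
Proof.
rewrite /EOpt.
apply: (@le_trans _ _ (\sum_(w : realization k 2 bool) prob_real pp w *
   (1 + \sum_(e : 'I_k * 'I_2) q^-1 * (w e.1 e.2)%:R))).
  by apply: ler_sum => w _; apply: ler_wpM2l; [apply: prob_ge0 | apply: optw_le].
under eq_bigr do rewrite mulrDr mulr1 mulr_sumr.
rewrite big_split /= sum_prob exchange_big /=.
under eq_bigr => e _.
  under eq_bigr do rewrite mulrCA.
  rewrite -mulr_sumr marg_elem mulVf; last by rewrite gt_eqF.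
  over.
rewrite sumr_const card_prod !card_ord -mul2n.
by rewrite mulnC natrM mulr_natl.
Qed.

Lemma EOpt_ge0 : 0 <= EOpt k 2 pp xx.
Proof.
apply: sumr_ge0 => w _; apply: mulr_ge0; first exact: prob_ge0.
by apply: bigmax_ge_id.
Qed.


Lemma Pobs_lift (j0 : 'I_2) :
  Pobs [ffun j => j == lift j0 ord0] = q * (1 - q).
Proof.
rewrite /Pobs big_ord_recl big_ord_recl big_ord0 !ffunE mulr1.
by case: j0 => [[|[|]]] //= ?; rewrite /pp /= // mulrC.
Qed.


Definition w0 : realization k 2 bool := [ffun _ => [ffun _ => false]].

Lemma Pobs_w0 i : Pobs (w0 i) = (1 - q) ^+ 2.
Proof.
rewrite /Pobs; under eq_bigr do rewrite !ffunE.
by rewrite prodr_const card_ord.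
Qed.

Lemma prob_w0 : prob_real pp w0 = (1 - q) ^+ (k.*2).
Proof.
rewrite /prob_real; under eq_bigr do rewrite -/(Pobs _) Pobs_w0.
by rewrite prodr_const card_ord -exprM -mul2n mulnC.
Qed.

Lemma prob_w0_ge : 1 - (k.*2)%:R * q <= prob_real pp w0.
Proof. rewrite prob_w0; apply: bern; lr. Qed.

Lemma payoff_le_opt (o : option (outcome k 2 bool)) (w : realization k 2 bool) : payoff xx o w <= optw w.
Proof.
case: o => [[[i j] t]|] /=; last exact: bigmax_ge_id.
case: eqP => [<-|_]; last exact: bigmax_ge_id.
by apply: (bigmax_sup (i, j)).
Qed.

Lemma payoff_ge0 (o : option (outcome k 2 bool)) (w : realization k 2 bool) : 0 <= payoff xx o w.
Proof.
case: o => [[[i j] t]|] //=; case: eqP => // _; exact: xx_ge0.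
Qed.

Lemma payoff_le (o : option (outcome k 2 bool)) (w : realization k 2 bool) : payoff xx o w <= q^-1.
Proof.
case: o => [[[i j] t]|] /=; last by rewrite invr_ge0 ltW.
case: eqP => _; [exact: xx_le | by rewrite invr_ge0 ltW].
Qed.

Lemma payoff_vals (o : option (outcome k 2 bool)) (w : realization k 2 bool) : 1 < payoff xx o w -> payoff xx o w = q^-1.
Proof.
case: o => [[[i j] t]|] /=; last by rewrite ltr10.
case: eqP => _; last by rewrite ltr10.
by case: t => //=; rewrite ltxx.
Qed.

Lemma sum_cond (i : 'I_k) (a : obs 2 bool) :
  \sum_(w : realization k 2 bool | w i == a) prob_real pp w = Pobs a.
Proof.
rewrite big_mkcond /=.
transitivity (\sum_(w : realization k 2 bool) prob_real pp w * (w i == a)%:R).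
  by apply: eq_bigr => w _; case: eqP => _; rewrite ?mulr1 ?mulr0.
rewrite (marg_real (fun b => (b == a)%:R)) (bigD1 a) //= eqxx mulr1 big1 ?addr0 //.
by move=> b /negbTE ->; rewrite mulr0.
Qed.


Lemma gap (Sigma : 'I_k -> Type)
  (g : (forall i, Sigma i) -> option (outcome k 2 bool))
  (s : forall i : 'I_k, obs 2 bool -> Sigma i) :
  adversarial pp xx g s ->
  EPrincipal pp xx g s <= EOpt k 2 pp xx - prob_real pp w0.
Proof.
move=> adv.
have gapw : forall w1 : realization k 2 bool,
    prob_real pp w1 * (optw w1 - payoff xx (g (signals s w1)) w1)
    <= EOpt k 2 pp xx - EPrincipal pp xx g s.
  move=> w1; rewrite /EOpt /EPrincipal -sumrB (bigD1 w1) //= -mulrBr.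
  have : 0 <= \sum_(w | w != w1) (prob_real pp w * optw w
                  - prob_real pp w * payoff xx (g (signals s w)) w).
    apply: sumr_ge0 => w _; rewrite -mulrBr; apply: mulr_ge0; first exact: prob_ge0.
    by rewrite subr_ge0 payoff_le_opt.
  rewrite /optw; lra.
suff : prob_real pp w0 <= EOpt k 2 pp xx - EPrincipal pp xx g s by lra.
have caseB : payoff xx (g (signals s w0)) w0 = 0 ->
    prob_real pp w0 <= EOpt k 2 pp xx - EPrincipal pp xx g s.
  move=> h0; apply: le_trans (gapw w0); rewrite h0 subr0.
  rewrite -[X in X <= _]mulr1; apply: ler_wpM2l; first exact: prob_ge0.
  apply: (bigmax_sup (Ordinal hk, ord0)) => //=; by rewrite !ffunE.
case E: (g (signals s w0)) => [[[i j0] t]|]; last by apply: caseB; rewrite E.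
case: t E => E; first by apply: caseB; rewrite E /= !ffunE.
pose j1 : 'I_2 := lift j0 ord0.
have j01 : j0 != j1 by apply: neq_lift.
pose w1 : realization k 2 bool :=
  [ffun i' => if i' == i then [ffun j => j == j1] else [ffun _ => false]].
pose a := w1 i.
have w1i : w1 i = [ffun j => j == j1] by rewrite /w1 ffunE eqxx.
have w1o : forall i', i' != i -> w1 i' = w0 i'.
  by move=> i' /negbTE hi; rewrite /w1 /w0 !ffunE hi.
have Fd0 : dfwith (signals s w1) (s i (w0 i)) = signals s w0.
  apply: functional_extensionality_dep => j.
  case: dfwithP => // j' hij; rewrite /signals w1o // eq_sym //.
have Fd1 : dfwith (signals s w1) (s i a) = signals s w1.
  apply: functional_extensionality_dep => j.
  by case: dfwithP.
have Pa : Pobs a = q * (1 - q) by rewrite /a w1i Pobs_lift.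
pose C := \prod_(i' | i' != i) Pobs (w1 i').
have pw1 : prob_real pp w1 = Pobs a * C by rewrite /prob_real (bigD1 i) //=.
have pw0 : prob_real pp w0 = (1 - q) ^+ 2 * C.
  rewrite /prob_real (bigD1 i) //= -/(Pobs _) Pobs_w0; congr (_ * _).
  by apply: eq_bigr => i' hi; rewrite w1o.
have C0 : 0 <= C by apply: prodr_ge0 => i' _; apply: Pobs_ge0.
have Z := prob_w0_ge.
have pay1 : payoff xx (g (signals s w1)) w1 <= 1.
  rewrite leNgt; apply/negP => hlt.
  have hq := payoff_vals hlt.
  have Wpos : 0 < Wdev pp g s a (s i (w0 i)).
    rewrite /Wdev (bigD1 w1) /=; last by rewrite /a eqxx.
    rewrite Fd0 E /= w1i ffunE eqxx /=.
    have -> : (j0 == j1) = false by apply/negbTE.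
    rewrite /= mulr1; apply: ltr_pwDl.
      by rewrite pw1; apply: mulr_gt0; [apply: Pobs_gt0 | apply: prodr_gt0 => i' _; apply: Pobs_gt0].
    by apply: sumr_ge0 => w _; apply: mulr_ge0 => //; apply: prob_ge0.
  have [_ hmin] := (adv i a).1 (ex_intro (fun sg => 0 < Wdev pp g s a sg) _ Wpos).
  have hm := hmin _ Wpos.
  have lo : prob_real pp w1 * q^-1 <= Udev pp xx g s a (s i a).
    rewrite /Udev (bigD1 w1) /=; last by rewrite /a eqxx.
    rewrite Fd1 hq -[X in X <= _]addr0 lerD2l.
    by apply: sumr_ge0 => w _; apply: mulr_ge0; [apply: prob_ge0 | apply: payoff_ge0].
  have hi : Udev pp xx g s a (s i (w0 i)) <=
      prob_real pp w1 + q^-1 * (Pobs a - prob_real pp w1).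
    rewrite /Udev (bigD1 w1) /=; last by rewrite /a eqxx.
    rewrite Fd0 E /= w1i ffunE.
    have -> : (j0 == j1) = false by apply/negbTE.
    rewrite /= /xx mulr1 lerD2l -(sum_cond i a) [X in _ <= _ * (X - _)](bigD1 w1) /=; last by rewrite /a eqxx.
    rewrite addrC addrK.
    rewrite mulr_sumr; apply: ler_sum => w _.
    by rewrite mulrC; apply: ler_wpM2r; [apply: prob_ge0 | apply: payoff_le].
  have C1 : C <= 1 by apply: prodr_ile1 => i' _; rewrite Pobs_ge0 Pobs_le1.
  have qr : q * q^-1 = 1 by rewrite mulfV // gt_eqF.
  have r0 : 0 < q^-1 by rewrite invr_gt0.
  have r4 : 4 <= q^-1.
    have := mulr_ge0 (ltW r0) (_ : 0 <= 1/4 - q); move: (q1) (hkq) => *.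
    have h : 0 <= q^-1 * (1 / 4 - q) by apply: mulr_ge0; [exact: ltW | lra].
    lra.
  have Cge : 2/3 <= C.
    have h2 : (1 - q) ^+ 2 <= 1.
      rewrite expr2; move: (q0) (q1) => *; nra.
    have : (1 - q) ^+ 2 * C <= C.
      by rewrite -[X in _ <= X]mul1r; apply: ler_wpM2r.
    move: (hkq) => *; lra.
  have P0 : 0 < Pobs a by apply: Pobs_gt0.
  have h1 : Pobs a * (2 * C * q^-1 - C - q^-1) <= 0.
    have := le_trans lo (le_trans hm hi); rewrite pw1; lra.
  rewrite pmulr_rle0 // in h1.
  have h3 : 0 <= (2 * C - 4/3) * (q^-1 - 4) by apply: mulr_ge0; lra.
  nra.
have ow1 : q^-1 <= optw w1.
  by apply: (bigmax_sup (i, j1)) => //=; rewrite w1i ffunE eqxx.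
apply: le_trans (gapw w1); rewrite pw0 pw1 Pa.
have e : q * (1 - q) * C * (q^-1 - 1) = (1 - q) ^+ 2 * C.
  have qr : q * q^-1 = 1 by rewrite mulfV // gt_eqF.
  have -> : q * (1 - q) * C * (q^-1 - 1) = (1 - q) * C * (q * q^-1) - q * (1 - q) * C by ring.
  rewrite qr; ring.
rewrite -e; apply: ler_wpM2l.
  by apply: mulr_ge0 => //; apply: mulr_ge0; move: (q0) (q1) => *; lra.
lra.
Qed.

End Main.

Unset Implicit Arguments.

Theorem mainTheorem3 (R : realType) (k : nat) (hk : (0 < k)%N)
  (rho : R) (hrho : 1 - 1 / (2 * k + 1)%:R < rho) :
  exists (m : nat) (T : finType) (p x : T -> R),
    sym_instance p x /\
    forall (Sigma : 'I_k -> Type)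
           (g : (forall i, Sigma i) -> option (outcome k m T)),
      ~ achieves p x g rho.
Proof.
have k2e : (2 * k + 1)%:R = (k.*2)%:R + 1 :> R by rewrite natrD -mul2n.
have k2p : 2 <= (k.*2)%:R :> R.
  by rewrite -mul2n natrM ler_peMr // ler1n.
pose dl := 1 - (1 - rho) * ((k.*2)%:R + 1).
have dl0 : 0 < dl.
  rewrite k2e in hrho.
  have hN : 0 < (k.*2)%:R + 1 :> R by lra.
  have : 1 / ((k.*2)%:R + 1) * ((k.*2)%:R + 1) = 1 :> R by rewrite mul1r mulVf // gt_eqF.
  rewrite /dl; move: hrho; set N := (k.*2)%:R + 1 => hr e.
  have : (1 - 1 / N) * N < rho * N by rewrite ltr_pM2r.
  rewrite mulrBl e mul1r; lra.
pose d := Num.min dl 1.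
have dd : d <= dl by rewrite ge_min lexx.
have d1 : d <= 1 by rewrite ge_min lexx orbT.
have d0 : 0 < d by rewrite lt_min dl0 ltr01.
pose q := d / (4 * (k.*2)%:R).
have k2q : (k.*2)%:R * q = d / 4.
  by rewrite /q; field; rewrite gt_eqF //; lra.
have q0 : 0 < q by rewrite /q divr_gt0 //; lra.
have q1 : q <= 1 / 4.
  have : 2 * q <= (k.*2)%:R * q by rewrite ler_wpM2r // ltW.
  lra.
have hkq : (k.*2)%:R * q <= 1 / 3 by rewrite k2q; lra.
exists 2, bool, (pp q), (xx q); split.
  split.
  - exact: (@pp_ge0 R k q q0 q1 hkq).
  - exact: (@sum_pp R k q q0 q1 hkq).
  - exact: (@xx_ge0 R k q q0 q1 hkq).
move=> Sigma g [[s adv] hall].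
have h1 := hall s adv.
have h2 := @gap R k hk q q0 q1 hkq _ _ _ adv.
have h3 := @prob_w0_ge R k q q0 q1 hkq.
have h4 := @EOpt_le R k q q0 q1 hkq.
have h5 := @EOpt_ge0 R k q.
rewrite k2q in h3.
have [hr|hr] := leP 1 rho.
  have : 0 <= (rho - 1) * EOpt k 2 (pp q) (xx q) by apply: mulr_ge0 => //; lra.
  lra.
have : 0 <= (1 - rho) * (1 + (k.*2)%:R - EOpt k 2 (pp q) (xx q)).
  by apply: mulr_ge0; lra.
rewrite /dl in dd; lra.
Qed.
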